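(* Let $F$ be a tree ensemble with input dimension $n$ and output dimension $1$, let $V_f$ be a set of variables referenced by $F$, let $\bar c=(c_1,\dots,c_n)\in\mathcal D^n$ and $d=f_{bin}(\bar c;F)$. Let $I\subseteq\{1,\dots,n\}$ be the set returned by the following procedure: set $S=\emptyset$ and $\hat x_i=\alpha(\{c_i\})$ for all $i$; for $i=1,\dots,n$ in order: set $\hat x_i=\top$; if $i\in V_f$, then if $\mathrm{Valid}(\hat x_1,\dots,\hat x_n)$ holds put $S:=S\cup\{i\}$, and otherwise reset $\hat x_i=\alpha(\{c_i\})$; finally return $I=V_f\setminus S$. Here $\mathrm{Valid}(\hat x_1,\dots,\hat x_n)$ holds iff $f_{bin}(\bar x;F)=d$ for every $\bar x\in\gamma(\hat x_1)\times\dots\times\gamma(\hat x_n)$. Then $E=\{(x_i,c_i):i\in I\}$ is a minimal explanation for the prediction $f_{bin}(\bar c;F)=d$: $E$ is valid, and no proper subset of $E$ is valid.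
   Context: $\mathcal{D}\subset\mathbb{R}$ is a fixed finite nonempty set. For nonempty $V\subseteq\mathcal D$, $\alpha(V)=[\min V,\max V]$, and $\gamma([l,u])=\{v\in\mathcal D:l\le v\le u\}$; $\top=\alpha(\mathcal D)$, so $\gamma(\top)=\mathcal D$ and $\gamma(\alpha(\{c\}))=\{c\}$. Decision tree $T=\{(X_1,y_1),\dots,(X_k,y_k)\}$: $X_1,\dots,X_k$ partition $\mathcal D^n$, $y_j\in\mathbb R$, $t(\bar x;T)=y_j$ iff $\bar x\in X_j$. Tree ensemble $F=(T_1,\dots,T_b)$: $f(\bar x;F)=\sum_i t(\bar x;T_i)$. Binary classifier: $f_{bin}(\bar x;F)=1$ if $1/(1+e^{-f(\bar x;F)})>0.5$, else $0$. Variables referenced: $V_f\subseteq\{1,\dots,n\}$ is such that, for every tree of $F$ and every leaf region $X_j$, membership $\bar x\in X_j$ does not depend on the coordinates $x_i$ with $i\notin V_f$ (i.e. $V_f$ contains the union of the coordinates tested by the decision rules of the trees). Valid explanation: $E\subseteq\{(x_1,c_1),\dots,(x_n,c_n)\}$ is valid for the prediction $f_{bin}(\bar c;F)=d$ iff every $\bar x\in\mathcal D^n$ with $x_i=c_i$ for all $(x_i,c_i)\in E$ satisfies $f_{bin}(\bar x;F)=d$. A valid explanation is minimal iff none of its proper subsets is valid. *)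

(* Defs.v *)
From mathcomp Require Import all_boot all_order all_algebra.
From mathcomp Require Import boolp reals sequences exp.
Set Implicit Arguments. Unset Strict Implicit. Unset Printing Implicit Defensive.
Import Order.TTheory GRing.Theory Num.Theory.
Local Open Scope ring_scope.

Section Defs.
Variables (R : realType) (n : nat).

(* The finite nonempty domain D is given as a (nonempty) sequence of reals. *)
Definition inDom (D : seq R) (x : 'I_n -> R) : Prop := forall i, x i \in D.

(* Interval abstract domain: an abstract value is a pair (l, u) = [l, u]. *)
Definition alpha (V : seq R) : R * R :=
  (foldr Num.min (head 0 V) V, foldr Num.max (head 0 V) V).
Definition gamma (D : seq R) (a : R * R) : pred R :=
  [pred v | (v \in D) && (a.1 <= v <= a.2)].
Definition top (D : seq R) : R * R := alpha D.

(* A decision tree: list of leaves (region X_j, value y_j). *)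
Definition leaf := ((('I_n -> R) -> bool) * R)%type.
Definition dtree := seq leaf.
Definition is_partition (D : seq R) (T : dtree) : Prop :=
  forall x, inDom D x -> count (fun l : leaf => l.1 x) T = 1%N.
Definition tval (T : dtree) (x : 'I_n -> R) : R :=
  head 0 [seq l.2 | l <- T & l.1 x].
Definition ensemble := seq dtree.
Definition fval (F : ensemble) (x : 'I_n -> R) : R := \sum_(T <- F) tval T x.
Definition fbin (F : ensemble) (x : 'I_n -> R) : nat :=
  if 1 / (1 + expR (- fval F x)) > 1 / 2 then 1%N else 0%N.

(* V_f: leaf membership (on D^n) does not depend on coordinates outside Vf *)
Definition referenced (D : seq R) (F : ensemble) (Vf : {set 'I_n}) : Prop :=
  forall T, T \in F -> forall l : leaf, l \in T ->
  forall x y, inDom D x -> inDom D y -> (forall i, i \in Vf -> x i = y i) ->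
  l.1 x = l.1 y.

(* Explanations E = {(x_i,c_i) : i in E} are represented by their index sets. *)
Definition valid_expl (D : seq R) (F : ensemble) (c : 'I_n -> R) (d : nat)
    (E : {set 'I_n}) : Prop :=
  forall x, inDom D x -> (forall i, i \in E -> x i = c i) -> fbin F x = d.
Definition minimal_expl (D : seq R) (F : ensemble) (c : 'I_n -> R) (d : nat)
    (E : {set 'I_n}) : Prop :=
  valid_expl D F c d E /\ (forall E' : {set 'I_n}, E' \proper E -> ~ valid_expl D F c d E').

Definition ValidAbs (D : seq R) (F : ensemble) (d : nat)
    (xh : 'I_n -> R * R) : Prop :=
  forall x : 'I_n -> R, (forall i, x i \in gamma D (xh i)) -> fbin F x = d.

Definition step (D : seq R) (F : ensemble) (d : nat) (Vf : {set 'I_n})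
    (c : 'I_n -> R) (st : {set 'I_n} * ('I_n -> R * R)) (i : 'I_n)
    : {set 'I_n} * ('I_n -> R * R) :=
  let xh' := fun j => if j == i then top D else st.2 j in
  if i \in Vf then
    (if `[< ValidAbs D F d xh' >] then (i |: st.1, xh')
     else (st.1, fun j => if j == i then alpha [:: c i] else st.2 j))
  else (st.1, xh').

Definition procedure (D : seq R) (F : ensemble) (Vf : {set 'I_n})
    (c : 'I_n -> R) : {set 'I_n} :=
  let d := fbin F c in
  let S := (foldl (step D F d Vf c) (set0, fun i => alpha [:: c i])
                  (enum 'I_n)).1 in
  Vf :\: S.

End Defs.

(* Main.v *)
Require Import Defs.
From mathcomp Require Import all_boot all_order all_algebra.
From mathcomp Require Import boolp reals sequences exp.
Set Implicit Arguments. Unset Strict Implicit. Unset Printing Implicit Defensive.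
Import Order.TTheory GRing.Theory Num.Theory.
Local Open Scope ring_scope.

Lemma foldr_min_le (R : realType) (a : R) (s : seq R) v :
  v \in s -> foldr Num.min a s <= v.
Proof.
elim: s => //= y s IH; rewrite in_cons => /orP [/eqP ->|/IH H].
  by rewrite ge_min lexx.
by rewrite ge_min H orbT.
Qed.

Lemma foldr_max_ge (R : realType) (a : R) (s : seq R) v :
  v \in s -> v <= foldr Num.max a s.
Proof.
elim: s => //= y s IH; rewrite in_cons => /orP [/eqP ->|/IH H].
  by rewrite le_max lexx.
by rewrite le_max H orbT.
Qed.

Lemma gamma_top (R : realType) (D : seq R) v :
  v \in gamma D (top D) = (v \in D).
Proof.
rewrite /gamma /top /alpha inE /=.
case vD: (v \in D) => //=.
by rewrite foldr_min_le // foldr_max_ge.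
Qed.

Lemma gamma_alpha1 (R : realType) (D : seq R) a v :
  v \in gamma D (alpha [:: a]) = (v \in D) && (v == a).
Proof.
rewrite /gamma /alpha inE /= minxx maxxx; case: (v \in D) => //=.
by rewrite eq_le andbC.
Qed.

Lemma fbin_ext (R : realType) n (D : seq R) (F : ensemble R n) Vf x y :
  referenced D F Vf -> inDom D x -> inDom D y ->
  (forall i, i \in Vf -> x i = y i) -> fbin F x = fbin F y.
Proof.
move=> Href Hx Hy Hxy; rewrite /fbin /fval.
rewrite (@eq_big_seq _ _ _ _ F (fun T => Defs.tval T x) (fun T => Defs.tval T y)) //.
move=> T TF; rewrite /Defs.tval; have -> : [seq l <- T | l.1 x] = [seq l <- T | l.1 y]; last by [].
apply: (@eq_in_filter _ (fun l : leaf R n => l.1 x) (fun l => l.1 y)) => l lT; exact: (Href T TF l lT x y Hx Hy Hxy).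
Qed.

Definition Inv (R : realType) n (D : seq R) (F : ensemble R n) (Vf : {set 'I_n})
  (c : 'I_n -> R) (P : seq 'I_n) (st : {set 'I_n} * ('I_n -> R * R)) : Prop :=
  [/\ (forall j, j \in st.1 -> (j \in Vf) && (j \in P)),
      (forall j, st.2 j = if (j \in P) && ((j \notin Vf) || (j \in st.1))
                          then top D else alpha [:: c j]),
      ValidAbs D F (fbin F c) st.2 &
      (forall i, i \in P -> i \in Vf -> i \notin st.1 ->
        exists x : 'I_n -> R, [/\ inDom D x,
          (forall j : 'I_n, j \in Vf :\: st.1 -> j != i -> x j = c j) &
          fbin F x != fbin F c])].

Lemma gammaD (R : realType) (D : seq R) a v : v \in gamma D a -> v \in D.
Proof. by rewrite inE => /andP []. Qed.

Lemma step_inv (R : realType) n (D : seq R) (F : ensemble R n) Vf c P st i :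
  referenced D F Vf -> inDom D c -> i \notin P ->
  Inv D F Vf c P st -> Inv D F Vf c (rcons P i) (step D F (fbin F c) Vf c st i).
Proof.
move=> Href Hc iP [Ha Hb Hv Hd].
have sti : st.2 i = alpha [:: c i] by rewrite Hb (negbTE iP).
have iS : i \notin st.1 by apply/negP => /Ha /andP [_ iP']; rewrite iP' in iP.
rewrite /step.
case iV: (i \in Vf).
  case: asboolP => HV.
    split => /=.
    - move=> j; rewrite in_setU1 mem_rcons in_cons => /orP [/eqP ->|/Ha /andP [-> ->]];
        by rewrite ?iV ?orbT ?eqxx.
    - move=> j; rewrite mem_rcons in_cons in_setU1; case: eqP => [->|ji] /=.
        by rewrite orbT.
      by rewrite Hb.
    - exact: HV.
    - move=> k; rewrite mem_rcons in_cons in_setU1 => /orP [/eqP ->|kP] kV.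
        by rewrite eqxx.
      rewrite negb_or => /andP [ki kS].
      have [x [x1 x2 x3]] := Hd k kP kV kS; exists x; split => // j.
      rewrite in_setD in_setU1 negb_or => /andP [/andP [_ jS] jV]; apply: x2.
      by rewrite in_setD jS.
  have [x [Hx Hne]] : exists x, (forall j, x j \in gamma D
         (if j == i then top D else st.2 j)) /\ fbin F x != fbin F c.
    apply: contrapT => Hn; apply: HV => x Hx; apply/eqP/negPn/negP => Hne.
    by apply: Hn; exists x.
  split => /=.
  - by move=> j /Ha /andP [-> jP]; rewrite mem_rcons in_cons jP orbT.
  - move=> j; rewrite mem_rcons in_cons; case: eqP => [->|ji] /=.
      by rewrite iV (negbTE iS).
    by rewrite Hb.
  - move=> x0 Hx0; apply: Hv => j; move: (Hx0 j); case: eqP => // ->.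
    by rewrite sti.
  - move=> k; rewrite mem_rcons in_cons => /orP [/eqP ->|kP] kV kS.
      exists x; split.
      + by move=> j; apply: gammaD (Hx j).
      + move=> j; rewrite in_setD => /andP [jS jV] ji.
        move: (Hx j); rewrite (negbTE ji) Hb jV (negbTE jS) andbF gamma_alpha1.
        by case/andP => _ /eqP.
      + done.
    exact: Hd.
split => /=.
- by move=> j /Ha /andP [-> jP]; rewrite mem_rcons in_cons jP orbT.
- move=> j; rewrite mem_rcons in_cons; case: eqP => [->|ji] /=.
    by rewrite iV.
  by rewrite Hb.
- move=> x Hx; pose y j := if j == i then c i else x j.
  have xD : inDom D x by move=> j; apply: gammaD (Hx j).
  have yD : inDom D y by move=> j; rewrite /y; case: eqP.
  rewrite (@fbin_ext _ _ D F Vf x y) //.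
    apply: Hv => j; rewrite /y; case: eqP => [->|ji].
      by rewrite sti gamma_alpha1 eqxx Hc.
    by move: (Hx j); rewrite (negbTE (introN eqP ji)).
  by move=> j jV; rewrite /y; case: eqP => // ji; rewrite ji iV in jV.
- move=> k; rewrite mem_rcons in_cons => /orP [/eqP ->|kP] kV kS.
    by rewrite iV in kV.
  exact: Hd.
Qed.

Lemma fold_inv (R : realType) n (D : seq R) (F : ensemble R n) Vf c :
  referenced D F Vf -> inDom D c ->
  forall s P st, uniq (P ++ s) -> Inv D F Vf c P st ->
  Inv D F Vf c (P ++ s) (foldl (step D F (fbin F c) Vf c) st s).
Proof.
move=> Href Hc; elim=> [|i s IH] P st U I0 /=; first by rewrite cats0.
rewrite -cat_rcons; apply: IH; first by rewrite cat_rcons.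
apply: step_inv => //.
by move: U; rewrite cat_uniq /= => /and3P [_ /norP [] ].
Qed.

Theorem mainTheorem8 (R : realType) (n : nat) (D : seq R) (F : ensemble R n)
  (Vf : {set 'I_n}) (c : 'I_n -> R) :
  D != [::] ->
  (forall T, T \in F -> is_partition D T) ->
  referenced D F Vf ->
  inDom D c ->
  minimal_expl D F c (fbin F c) (procedure D F Vf c).
Proof.
move=> HD _ Href Hc.
have I0 : Inv D F Vf c [::] (set0, fun i => alpha [:: c i]).
  split => //=.
  - by move=> j; rewrite in_set0.
  - move=> x Hx; have -> // : x = c.
    apply: funext => j; move: (Hx j); rewrite gamma_alpha1.
    by case/andP => _ /eqP.
have := @fold_inv R n D F Vf c Href Hc (enum 'I_n) [::]
  (set0, fun i => alpha [:: c i]) (enum_uniq _) I0.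
rewrite /procedure /=.
set st := foldl _ _ _ => -[Ha Hb Hv Hd].
split.
  move=> x xD Hx; apply: Hv => j; rewrite Hb mem_enum /=.
  case: ifP => H; first by rewrite gamma_top.
  rewrite gamma_alpha1 xD /= Hx // in_setD.
  by move: H; case: (j \in Vf); case: (j \in st.1).
move=> E' /properP [sub [i iI iE]] HE.
move: (iI); rewrite in_setD => /andP [iS iV].
have [x [xD x2 x3]] := Hd i (mem_enum _ _) iV iS.
move/negP: x3; apply; apply/eqP; apply: HE => // j jE.
apply: x2; first by apply: (subsetP sub).
by apply/eqP => ji; rewrite -ji jE in iE.
Qed.
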